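(* Let $X$ be a uniformly convex, uniformly smooth real Banach space with normalized duality map $J$ and inverse $J^{-1}:X^*\to X$. Let $a,b\in S^*$ with $b\notin\{a,-a\}$, let $\delta(a,b)$ be the meridian arc between $a$ and $b$, and let $W(a,b)$ be the wedge engendered by it. Then $$W(a,b)^\circ=\bigcup_{c\in\delta(a,b)}\{tJ^{-1}c:t\ge 0\}=\operatorname{cone}\big(J^{-1}(\delta(a,b))\big).$$
   Context: $X^*$ is the norm dual of $X$ with pairing $\langle\cdot,\cdot\rangle$, and $S^*=\{c\in X^*:\|c\|_{X^*}=1\}$. The normalized duality map $J:X\to X^*$ is defined by $\langle Jx,x\rangle=\|Jx\|_{X^*}\|x\|=\|x\|^2=\|Jx\|_{X^*}^2$; it is a homogeneous homeomorphism. For $a,b\in S^*$ with $b\notin\{a,-a\}$, the meridian arc is $\delta(a,b)=\{(\lambda a+\mu b)/\|\lambda a+\mu b\|_{X^*}:\lambda,\mu\ge 0,\ (\lambda,\mu)\neq(0,0)\}$, i.e. the arc of $\operatorname{span}\{a,b\}\cap S^*$ joining $a$ and $b$ containing no pair of diametrically opposite points. The wedge engendered by $\delta(a,b)$ is the closed convex cone $W(a,b)=\{x\in X:\langle c,x\rangle\le 0 \text{ for all } c\in\delta(a,b)\}$. For a set $A$, $\operatorname{cone}A=\{ta:t\ge 0,a\in A\}$. The polar of a closed convex cone $K$ is $K^\circ=\{x\in X:P_Kx=0\}$, where $P_K x=\operatorname{argmin}\{\|x-k\|:k\in K\}$ is the metric projection. *)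

(* Defs.v *)
From HB Require Import structures.
From mathcomp Require Import all_boot all_order all_algebra.
From mathcomp Require Import all_classical all_reals all_analysis.
Set Implicit Arguments. Unset Strict Implicit. Unset Printing Implicit Defensive.
Import Order.TTheory GRing.Theory Num.Theory.
Import numFieldNormedType.Exports.
Local Open Scope classical_set_scope.
Local Open Scope ring_scope.

Section Banach.
Variables (R : realType) (X : completeNormedModType R).

Definition is_dual (f : X -> R) : Prop :=
  [/\ forall x y : X, f (x + y) = f x + f y,
      forall (r : R) (x : X), f (r *: x) = r * f x
    & continuous f].

Definition dnorm (f : X -> R) : R :=
  sup [set `|f x| | x in [set x : X | `|x| <= 1]].

Definition dual_sphere : set (X -> R) := [set c | is_dual c /\ dnorm c = 1].

Definition uniformly_convex : Prop :=
  forall eps : R, 0 < eps <= 2 -> exists2 delta : R, 0 < delta &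
    forall x y : X, `|x| <= 1 -> `|y| <= 1 -> eps <= `|x - y| ->
      `|(2 : R)^-1 *: (x + y)| <= 1 - delta.

Definition smooth_modulus (t : R) : R :=
  sup [set (`|p.1 + p.2| + `|p.1 - p.2|) / 2 - 1
       | p in [set p : X * X | `|p.1| = 1 /\ `|p.2| = t]].

Definition uniformly_smooth : Prop :=
  (fun t : R => smooth_modulus t / t) @ 0^'+ --> (0 : R).

(* Normalized duality relation: c = J x, i.e.
   <c,x> = |c|_* |x| = |x|^2 = |c|_*^2, with c in X^*. *)
Definition duality (x : X) (c : X -> R) : Prop :=
  [/\ is_dual c, c x = dnorm c * `|x|, dnorm c * `|x| = `|x| ^+ 2
    & `|x| ^+ 2 = dnorm c ^+ 2].

(* J^{-1} c as a set: the (unique, in our setting) x with J x = c. *)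
Definition Jinv_set (c : X -> R) : set X := [set x | duality x c].

Definition meridian_arc (a b : X -> R) : set (X -> R) :=
  [set c | exists lam mu : R, [/\ 0 <= lam, 0 <= mu, (lam, mu) != (0, 0) &
     c = (fun x => (lam * a x + mu * b x) / dnorm (fun y => lam * a y + mu * b y))]].

Definition wedge (a b : X -> R) : set X :=
  [set x | forall c, meridian_arc a b c -> c x <= 0].

Definition cone (A : set X) : set X := [set z | exists t : R, exists y : X, [/\ 0 <= t, A y & z = t *: y]].

Definition metric_proj (K : set X) (x : X) : set X :=
  [set k | K k /\ forall k', K k' -> `|x - k| <= `|x - k'|].

Definition polar (K : set X) : set X := [set x | metric_proj K x = [set 0]].

End Banach.

(* Main.v *)
Require Import Defs.
From HB Require Import structures.
From mathcomp Require Import all_boot all_order all_algebra.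
From mathcomp Require Import all_classical all_reals all_analysis.
From mathcomp Require Import ring lra.
Import Order.TTheory GRing.Theory Num.Theory.
Import numFieldNormedType.Exports.
Local Open Scope classical_set_scope.
Local Open Scope ring_scope.
Set Implicit Arguments. Unset Strict Implicit. Unset Printing Implicit Defensive.

Section Aux.
Variables (R : realType) (X : completeNormedModType R).
Implicit Types (f g a b c p : X -> R) (x y z k : X).

Lemma dnorm_ge0 f : 0 <= dnorm f.
Proof.
rewrite /dnorm; have [hub|nhub] := pselect (has_ubound [set `|f x| | x in [set x : X | `|x| <= 1]]).
  apply: le_trans (normr_ge0 (f 0)) _; apply: (ub_le_sup hub).
  by exists 0 => //=; rewrite normr0.
by rewrite sup_out // => -[].
Qed.

Lemma dual0 f : is_dual f -> f 0 = 0.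
Proof.
case=> add _ _; have := add 0 0; rewrite addr0 => h.
by apply/eqP; rewrite -(subrr (f 0)) {2}h addrK.
Qed.

Lemma dualN f z : is_dual f -> f (- z) = - f z.
Proof. by case=> _ sc _; rewrite -scaleN1r sc mulN1r. Qed.

Lemma dualB f z w : is_dual f -> f (z - w) = f z - f w.
Proof. by move=> hf; case: (hf) => add _ _; rewrite add dualN. Qed.

Lemma dual_bounded f : is_dual f -> exists2 M, 0 < M & forall z, `|f z| <= M * `|z|.
Proof.
move=> hf; case: (hf) => add sc cf.
have := cf 0; move=> /cvgr_dist_lt /(_ _ ltr01) /nbhs_norm0P [e e0 he].
exists (2 / e); first by rewrite divr_gt0.
move=> z; have [->|z0] := eqVneq z 0; first by rewrite (dual0 hf) normr0 mulr_ge0 // divr_ge0 // ltW.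
have nz : 0 < `|z| by rewrite normr_gt0.
have k0 : 0 < e / 2 / `|z| by rewrite !divr_gt0.
have := he ((e / 2 / `|z|) *: z).
rewrite /= normrZ (gtr0_norm k0) divfK ?gt_eqF //.
rewrite (dual0 hf) sub0r normrN sc normrM (gtr0_norm k0).
have e2 : e / 2 < e by rewrite ltr_pdivrMr // ltr_pMr // ltr1n.
move=> /(_ e2) h; apply/ltW.
have -> : 2 / e * `|z| = (e / 2 / `|z|)^-1 * 1.
  by field; rewrite gt_eqF //= gt_eqF.
by rewrite ltr_pdivlMl.
Qed.


Definition dset f := [set `|f x| | x in [set x : X | `|x| <= 1]].

Lemma dset_ub f : is_dual f -> has_ubound (dset f).
Proof.
move=> /dual_bounded [M M0 hM]; exists M => _ [x /= hx <-].
apply: le_trans (hM x) _; by rewrite ler_piMr // ltW.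
Qed.

Lemma dual_le f z : is_dual f -> `|f z| <= dnorm f * `|z|.
Proof.
move=> hf; have [->|z0] := eqVneq z 0.
  by rewrite (dual0 hf) normr0 mulr_ge0 // dnorm_ge0.
have nz : 0 < `|z| by rewrite normr_gt0.
have nz' : 0 <= `|z|^-1 by rewrite invr_ge0 ltW.
have h1 : `|f (`|z|^-1 *: z)| <= dnorm f.
  apply: (ub_le_sup (dset_ub hf)); rewrite /dset; exists (`|z|^-1 *: z) => //=.
  by rewrite normrZ (ger0_norm nz') mulVf ?gt_eqF.
case: (hf) => _ sc _; move: h1; rewrite sc normrM (ger0_norm nz').
by rewrite mulrC ler_pdivrMr.
Qed.

Lemma dnorm_le f M : (forall z, `|z| <= 1 -> `|f z| <= M) -> dnorm f <= M.
Proof.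
move=> h; apply: ge_sup; first by exists `|f 0|, 0 => //=; rewrite normr0.
by move=> _ [x hx <-]; exact: h.
Qed.

Lemma dnorm_leM f M : 0 <= M -> (forall z, `|f z| <= M * `|z|) -> dnorm f <= M.
Proof.
move=> M0 h; apply: dnorm_le => z hz; apply: le_trans (h z) _.
by rewrite ler_piMr.
Qed.

Lemma is_dual_lin f g (al be ga : R) : is_dual f -> is_dual g ->
  is_dual (fun x => (al * f x + be * g x) * ga).
Proof.
move=> [fa fs fc] [ga' gs gc]; split.
- by move=> x y; rewrite fa ga'; ring.
- by move=> r x; rewrite fs gs; ring.
- move=> x; apply: cvgMl; apply: cvgD; apply: cvgMr; [exact: fc|exact: gc].
Qed.


Lemma is_dual_scale f (s : R) : is_dual f -> is_dual (fun x => s * f x).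
Proof.
move=> [fa fs fc]; split.
- by move=> x y; rewrite fa; ring.
- by move=> r x; rewrite fs; ring.
- by move=> x; apply: cvgMr; exact: fc.
Qed.

Lemma dnorm_scale_le f (s : R) : is_dual f -> dnorm (fun x => s * f x) <= `|s| * dnorm f.
Proof.
move=> hf; apply: dnorm_leM; first by rewrite mulr_ge0 // dnorm_ge0.
by move=> z; rewrite normrM -mulrA ler_wpM2l // dual_le.
Qed.

Lemma dnorm_scale f (s : R) : is_dual f -> dnorm (fun x => s * f x) = `|s| * dnorm f.
Proof.
move=> hf; apply/le_anti; rewrite dnorm_scale_le //=.
have [->|s0] := eqVneq s 0; first by rewrite normr0 mul0r dnorm_ge0.
have e : f = (fun x => s^-1 * (s * f x)).
  by apply: funext => x; rewrite mulrA mulVf // mul1r.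
rewrite -ler_pdivlMl ?normr_gt0 // -normrV ?unitfE //.
by rewrite {1}e; apply: dnorm_scale_le; apply: is_dual_scale.
Qed.

Lemma uc_strict : uniformly_convex X -> forall u v : X, `|u| = `|v| ->
  `|(2 : R)^-1 *: (u + v)| = `|u| -> u = v.
Proof.
move=> uc u v huv hm; apply/eqP; apply/negPn; apply/negP => uv.
have [u0|u0] := eqVneq u 0.
  by move: huv uv; rewrite u0 normr0 => /esym/normr0_eq0 ->; rewrite eqxx.
have nu : 0 < `|u| by rewrite normr_gt0.
set r := `|u|^-1.
have r0 : 0 < r by rewrite invr_gt0.
have uv0 : u - v != 0 by rewrite subr_eq0.
have eps0 : 0 < `|r *: u - r *: v| by rewrite -scalerBr normrZ gtr0_norm // mulr_gt0 // normr_gt0.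
have hu : `|r *: u| = 1 by rewrite normrZ gtr0_norm // mulVf ?gt_eqF.
have hv : `|r *: v| = 1 by rewrite normrZ gtr0_norm // -huv mulVf ?gt_eqF.
have eps2 : `|r *: u - r *: v| <= 2.
  by apply: le_trans (ler_normB _ _) _; rewrite hu hv.
have [d d0 hd] : exists2 d : R, 0 < d & forall x y : X, `|x| <= 1 -> `|y| <= 1 -> `|r *: u - r *: v| <= `|x - y| -> `|(2 : R)^-1 *: (x + y)| <= 1 - d.
  by apply: uc; rewrite eps0 eps2.
have := hd (r *: u) (r *: v); rewrite hu hv lexx => /(_ isT isT (lexx _)).
rewrite -scalerDr scalerA mulrC -scalerA normrZ gtr0_norm // hm mulVf ?gt_eqF //.
by move=> h; move: d0; rewrite ltNge; apply/negP/negPn; lra.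
Qed.


Lemma dualD f z w : is_dual f -> f (z + w) = f z + f w.
Proof. by case=> ? _ _. Qed.

Lemma dualZ f (r : R) z : is_dual f -> f (r *: z) = r * f z.
Proof. by case=> _ ? _. Qed.

Lemma dual_nonzero f : is_dual f -> dnorm f = 1 -> exists z, f z = 1.
Proof.
move=> hf h1; case: (pselect (exists z, f z != 0)) => [[z hz]|nz].
  by exists ((f z)^-1 *: z); rewrite dualZ // mulVf.
have : dnorm f <= 0.
  apply: dnorm_le => z _; suff -> : f z = 0 by rewrite normr0.
  by apply/eqP; apply: contra_notT nz => h; exists z.
by rewrite h1 ler10.
Qed.

Lemma farkas a b p : is_dual a -> is_dual b -> dnorm a = 1 -> dnorm b = 1 ->
  b <> a -> b <> (fun x => - a x) -> is_dual p ->
  (forall k, a k <= 0 -> b k <= 0 -> p k <= 0) ->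
  exists lam mu : R, [/\ 0 <= lam, 0 <= mu & forall z, p z = lam * a z + mu * b z].
Proof.
move=> ha hb na nb ba bNa hp hW.
have [pa hpa] := dual_nonzero ha na.
have [q [aq bq]] : exists q, a q = 0 /\ b q != 0.
  case: (pselect (exists q, a q = 0 /\ b q != 0)) => // nq.
  have bz : forall z, b z = b pa * a z.
    move=> z; set w := z - a z *: pa.
    have aw : a w = 0 by rewrite /w dualB // dualZ // hpa mulr1 subrr.
    have bw : b w = 0.
      by apply/eqP; apply: contra_notT nq => h; exists w.
    by move: bw; rewrite /w dualB // dualZ // => /eqP; rewrite subr_eq0 mulrC => /eqP.
  have eb : b = (fun x => b pa * a x) by apply: funext.
  have := dnorm_scale (b pa) ha; rewrite -eb nb na mulr1.
  case: (ger0P (b pa)) => hs hn.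
    by exfalso; apply: ba; rewrite eb -hn; apply: funext => x; rewrite mul1r.
  by exfalso; apply: bNa; rewrite eb; apply: funext => x; rewrite -(opprK (b pa)) -hn mulN1r.
set v := (b q)^-1 *: q.
have av : a v = 0 by rewrite /v dualZ // aq mulr0.
have bv : b v = 1 by rewrite /v dualZ // mulVf.
set u := pa - b pa *: v.
have au : a u = 1 by rewrite /u dualB // dualZ // av mulr0 subr0.
have bu : b u = 0 by rewrite /u dualB // dualZ // bv mulr1 subrr.
exists (p u), (p v); split.
- have : p (- u) <= 0 by apply: hW; rewrite dualN // ?au ?bu ?ler0N1 ?oppr0.
  by rewrite dualN // oppr_le0.
- have : p (- v) <= 0 by apply: hW; rewrite dualN // ?av ?bv ?ler0N1 ?oppr0.
  by rewrite dualN // oppr_le0.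
move=> z; set w := z - a z *: u - b z *: v.
have aw : a w = 0 by rewrite /w !dualB // (@dualZ a (a z) u) // (@dualZ a (b z) v) // au av; ring.
have bw : b w = 0 by rewrite /w !dualB // (@dualZ b (a z) u) // (@dualZ b (b z) v) // bu bv; ring.
have pw1 : p w <= 0 by apply: hW; rewrite ?aw ?bw.
have pw2 : p (- w) <= 0 by apply: hW; rewrite dualN // ?aw ?bw oppr0.
have pw : p w = 0 by apply/le_anti; rewrite pw1 -oppr_le0 -dualN.
move: pw; rewrite /w (@dualB p (z - a z *: u) (b z *: v) hp) (@dualB p z (a z *: u) hp).
rewrite (@dualZ p (a z) u) // (@dualZ p (b z) v) // => h.
rewrite (mulrC (p u)) (mulrC (p v)); lra.
Qed.


Definition Qd (x h : X) (s : R) := (`|x + s *: h| - `|x|) / s.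
Definition Dd (x h : X) := inf [set Qd x h s | s in [set s : R | 0 < s]].

Lemma Q_lb x h s : 0 < s -> - `|h| <= Qd x h s.
Proof.
move=> s0; rewrite /Qd ler_pdivlMr //.
have := ler_normD (x + s *: h) (- (s *: h)); rewrite addrK normrN normrZ gtr0_norm //.
move=> H; rewrite mulNr (mulrC _ s); lra.
Qed.

Lemma Q_ub x h s : 0 < s -> Qd x h s <= `|h|.
Proof.
move=> s0; rewrite /Qd ler_pdivrMr //.
have := ler_normD x (s *: h); rewrite normrZ gtr0_norm // => H.
rewrite (mulrC _ s); lra.
Qed.

Lemma Q_mono x h s t : 0 < s -> s <= t -> Qd x h s <= Qd x h t.
Proof.
move=> s0 st; have t0 : 0 < t by apply: lt_le_trans st.
have e : x + s *: h = (1 - s / t) *: x + (s / t) *: (x + t *: h).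
  by rewrite scalerDr scalerA divfK ?gt_eqF // scalerBl scale1r addrA subrK.
have k0 : 0 <= s / t by rewrite divr_ge0 // ltW.
have k1 : 0 <= 1 - s / t by rewrite subr_ge0 ler_pdivrMr // mul1r.
have := ler_normD ((1 - s / t) *: x) ((s / t) *: (x + t *: h)).
rewrite -e (normrZ (1 - s / t)) (normrZ (s / t)) (ger0_norm k0) (ger0_norm k1) => H.
rewrite /Qd ler_pdivrMr // mulrAC ler_pdivlMr //.
have H2 : (`|x + s *: h| - `|x|) <= s / t * (`|x + t *: h| - `|x|) by lra.
by move: H2; rewrite -ler_pdivlMr // => H2; apply: le_trans H2 _; rewrite mulrC mulrA le_refl.
Qed.

Lemma Dset_lb x h : has_lbound [set Qd x h s | s in [set s : R | 0 < s]].
Proof. by exists (- `|h|) => _ [s s0 <-]; exact: Q_lb. Qed.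

Lemma D_le x h s : 0 < s -> Dd x h <= Qd x h s.
Proof. by move=> s0; apply: (ge_inf (Dset_lb x h)); exists s. Qed.

Lemma D_ge x h m : (forall s, 0 < s -> m <= Qd x h s) -> m <= Dd x h.
Proof.
move=> H; apply: lb_le_inf; first by exists (Qd x h 1), 1 => //=.
by move=> _ [s s0 <-]; exact: H.
Qed.

Lemma D_approx x h e : 0 < e -> exists2 s, 0 < s &
  forall s', 0 < s' -> s' <= s -> Qd x h s' < Dd x h + e.
Proof.
move=> e0; have := @inf_lt _ [set Qd x h s | s in [set s : R | 0 < s]] (Dd x h + e).
case.
- by exists (Qd x h 1), 1 => //=.
- by rewrite ltrDl.
move=> _ [s s0 <-] hs; exists s => // s' s'0 s's.
by apply: le_lt_trans hs; apply: Q_mono.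
Qed.


Lemma Q_add x h1 h2 s : 0 < s -> Qd x (h1 + h2) s <= Qd x h1 (2 * s) + Qd x h2 (2 * s).
Proof.
move=> s0; have s2 : 0 < 2 * s by rewrite mulr_gt0.
have k : (2:R)^-1 * (2 * s) = s by rewrite mulrA mulVf ?mul1r // pnatr_eq0.
have k2 : (2:R)^-1 + 2^-1 = 1 by field.
have e : x + s *: (h1 + h2) = (2:R)^-1 *: (x + (2 * s) *: h1) + (2:R)^-1 *: (x + (2 * s) *: h2).
  rewrite !scalerDr !scalerA k addrACA -scalerDl k2 scale1r //.
have := ler_normD ((2:R)^-1 *: (x + (2 * s) *: h1)) ((2:R)^-1 *: (x + (2 * s) *: h2)).
rewrite -e (normrZ (2^-1)) (normrZ (2^-1)) ger0_norm ?invr_ge0 ?ler0n //.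
rewrite /Qd.
set A := `|x + (2 * s) *: h1|; set B := `|x + (2 * s) *: h2|; set C := `|x + s *: (h1 + h2)|.
have -> : (A - `|x|) / (2 * s) + (B - `|x|) / (2 * s) = (2^-1 * A + 2^-1 * B - `|x|) / s.
  by field; rewrite gt_eqF.
move=> H; apply: ler_wpM2r; first by rewrite invr_ge0 ltW.
lra.
Qed.


Lemma D_sub x h1 h2 : Dd x (h1 + h2) <= Dd x h1 + Dd x h2.
Proof.
apply/ler_addgt0Pr => e e0; have e2 : 0 < e / 2 by rewrite divr_gt0.
have [s1 s10 H1] := D_approx x h1 e2.
have [s2 s20 H2] := D_approx x h2 e2.
set m := Num.min s1 s2.
have m0 : 0 < m by rewrite lt_min s10 s20.
have m2 : 0 < m / 2 by rewrite divr_gt0.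
have hm : 2 * (m / 2) = m by rewrite mulrC divfK // pnatr_eq0.
apply: le_trans (D_le _ _ m2) _; apply: le_trans (Q_add _ _ _ m2) _.
have ms1 : m <= s1 by rewrite ge_min lexx.
have ms2 : m <= s2 by rewrite ge_min lexx orbT.
rewrite hm; have := H1 m m0 ms1; have := H2 m m0 ms2.
move=> a1 a2; apply/ltW; lra.
Qed.

Lemma Q0 x s : 0 < s -> Qd x 0 s = 0.
Proof. by move=> s0; rewrite /Qd scaler0 addr0 subrr mul0r. Qed.

Lemma D0 x : Dd x 0 = 0.
Proof.
apply/le_anti; rewrite (le_trans (D_le x 0 ltr01)) ?Q0 //=.
by apply: D_ge => s s0; rewrite Q0.
Qed.

Lemma D_Ngt x h : 0 <= Dd x h + Dd x (- h).
Proof. by have := D_sub x h (- h); rewrite subrr D0. Qed.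

Lemma D_ub x h : Dd x h <= `|h|.
Proof. exact: le_trans (D_le x h ltr01) (Q_ub x h ltr01). Qed.

Lemma D_scale_ge x h (r : R) : 0 < r -> r * Dd x h <= Dd x (r *: h).
Proof.
move=> r0; apply: D_ge => s s0.
have -> : Qd x (r *: h) s = r * Qd x h (s * r).
  by rewrite /Qd scalerA; field; rewrite !gt_eqF.
by apply: ler_wpM2l; [exact: ltW | apply: D_le; exact: mulr_gt0].
Qed.

Lemma D_scale_pos x h (r : R) : 0 < r -> Dd x (r *: h) = r * Dd x h.
Proof.
move=> r0; apply/le_anti; rewrite D_scale_ge // andbT.
have ri : 0 < r^-1 by rewrite invr_gt0.
have := D_scale_ge x (r *: h) ri; rewrite scalerA mulVf ?gt_eqF // scale1r.
by rewrite ler_pdivrMl.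
Qed.



Lemma sm_ge (u w : X) : `|u| = 1 ->
  (`|u + w| + `|u - w|) / 2 - 1 <= smooth_modulus X `|w|.
Proof.
move=> u1; apply: ub_le_sup; last by exists (u, w).
exists `|w| => _ [[p1 p2] /= [n1 n2] <-].
have h1 := ler_normD p1 p2; have h2 := ler_normB p1 p2.
rewrite n1 n2 in h1 h2; rewrite lerBlDr ler_pdivrMr ?ltr0n //; lra.
Qed.

Lemma D_smooth x h : uniformly_smooth X -> x != 0 -> Dd x h + Dd x (- h) <= 0.
Proof.
move=> us x0; apply/ler_addgt0Pr => e e0; rewrite add0r.
have [->|h0] := eqVneq h 0; first by rewrite oppr0 D0 addr0 ltW.
set r := `|x|; set nh := `|h|.
have r0 : 0 < r by rewrite normr_gt0.
have nh0 : 0 < nh by rewrite normr_gt0.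
set e' := e / (2 * nh).
have e'0 : 0 < e' by rewrite divr_gt0 // mulr_gt0.
have H := us; rewrite /uniformly_smooth in H; move/cvgr_dist_lt: H => /(_ _ e'0) H.
have [t [t0 Ht]] := filter_ex (filterI (nbhs_right_gt (0:R)) H).
move: Ht; rewrite sub0r normrN => Ht.
have Ht' : smooth_modulus X t < e' * t.
  by rewrite -ltr_pdivrMr //; apply: le_lt_trans (ler_norm _) Ht.
set s := t * r / nh.
have s0 : 0 < s by rewrite divr_gt0 // mulr_gt0.
set u := r^-1 *: x; set w := (s / r) *: h.
have u1 : `|u| = 1.
  by rewrite normrZ ger0_norm ?mulVf ?gt_eqF // invr_ge0 ltW.
have wt : `|w| = t.
  rewrite normrZ ger0_norm; last by rewrite divr_ge0 // ltW.
  rewrite /s -/nh; field; rewrite !gt_eqF //.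
have uw1 : u + w = r^-1 *: (x + s *: h).
  by rewrite /u /w scalerDr scalerA mulrC.
have uw2 : u - w = r^-1 *: (x + s *: (- h)).
  by rewrite /u /w scalerDr scalerA scalerN mulrC.
have := sm_ge w u1; rewrite uw1 uw2 wt !normrZ ger0_norm; last by rewrite invr_ge0 ltW.
set A := `|x + s *: h|; set B := `|x + s *: (- h)|; move=> sm.
apply: le_trans (lerD (D_le x h s0) (D_le x (- h) s0)) _.
have -> : Qd x h s + Qd x (- h) s = (A + B - 2 * r) / s by rewrite /Qd -/A -/B -/r; field; rewrite gt_eqF.
have -> : A + B - 2 * r = 2 * r * ((r^-1 * A + r^-1 * B) / 2 - 1) by field; rewrite gt_eqF.
apply/ltW; rewrite ltr_pdivrMr //.
apply: le_lt_trans (ler_wpM2l _ sm) _; first by rewrite mulr_ge0 ?ltW.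
have -> : e * s = 2 * r * (e' * t) by rewrite /e' /s; field; rewrite !gt_eqF.
by rewrite ltr_pM2l // mulr_gt0.
Qed.


Section Deriv.
Variable x : X.
Hypothesis us : uniformly_smooth X.
Hypothesis x0 : x != 0.

Lemma D_odd h : Dd x (- h) = - Dd x h.
Proof.
apply/eqP; rewrite -subr_eq0 opprK addrC; apply/eqP/le_anti.
by rewrite D_smooth // D_Ngt.
Qed.

Lemma D_add h1 h2 : Dd x (h1 + h2) = Dd x h1 + Dd x h2.
Proof.
apply/le_anti; rewrite D_sub /=.
have := D_sub x (h1 + h2) (- h2); rewrite addrK D_odd.
by rewrite lerBrDr.
Qed.

Lemma D_scale (r : R) h : Dd x (r *: h) = r * Dd x h.
Proof.
case: (ltrgt0P r) => [r0|r0|->]; first exact: D_scale_pos.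
- have : 0 < - r by rewrite oppr_gt0.
  move/(D_scale_pos x h); rewrite scaleNr D_odd => H.
  by rewrite -[LHS]opprK H mulNr opprK.
- by rewrite scale0r D0 mul0r.
Qed.

Lemma D_norm h : `|Dd x h| <= `|h|.
Proof.
rewrite ler_norml D_ub andbT; have := D_ub x (- h).
by rewrite D_odd normrN lerNl.
Qed.

Lemma D_cont : continuous (Dd x).
Proof.
move=> z; apply/cvgrPdist_lt => e e0.
near=> w.
have -> : Dd x z - Dd x w = Dd x (z - w) by rewrite D_add D_odd.
apply: le_lt_trans (D_norm _) _.
near: w; apply: cvgr_dist_lt => //; exact: cvg_id.
Unshelve. all: by end_near.
Qed.

Lemma D_dual : is_dual (Dd x).
Proof. split; [exact: D_add | exact: D_scale | exact: D_cont]. Qed.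

Lemma D_x : Dd x x = `|x|.
Proof.
have Qx s : 0 < s -> Qd x x s = `|x|.
  move=> s0; rewrite /Qd -{1}(scale1r x) -scalerDl normrZ ger0_norm.
    by field; rewrite gt_eqF.
  by rewrite addr_ge0 // ltW.
apply/le_anti; rewrite -{1}(Qx 1 ltr01) D_le //=.
by apply: D_ge => s s0; rewrite Qx.
Qed.

Lemma D_min k : (forall s, 0 < s -> `|x| <= `|x - s *: k|) -> Dd x k <= 0.
Proof.
move=> H; rewrite -oppr_ge0 -D_odd; apply: D_ge => s s0.
by rewrite /Qd scalerN divr_ge0 ?subr_ge0 ?H // ltW.
Qed.

End Deriv.


Lemma arch_inv (d : R) : 0 < d -> exists N : nat, N.+1%:R^-1 < d.
Proof.
move=> d0; exists (Num.truncn d^-1).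
by rewrite -ltf_pV2 ?(posrE,divr_gt0) // ?invrK ?truncnS_gt // invr_gt0.
Qed.

Lemma inv_mono (n m : nat) : (n <= m)%N -> m.+1%:R^-1 <= n.+1%:R^-1 :> R.
Proof. by move=> nm; rewrite lef_pV2 ?posrE // ler_nat ltnS. Qed.

Lemma dual_le1 f z : is_dual f -> dnorm f = 1 -> f z <= `|z|.
Proof. by move=> hf h1; apply: le_trans (ler_norm _) _; rewrite -[`|z|]mul1r -h1 dual_le. Qed.

Lemma attain a : uniformly_convex X -> is_dual a -> dnorm a = 1 ->
  exists y, `|y| = 1 /\ a y = 1.
Proof.
move=> uc ha na.
have sq : forall n : nat, exists z, `|z| <= 1 /\ 1 - n.+1%:R^-1 < a z.
  move=> n; have : 1 - n.+1%:R^-1 < sup (dset a).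
    by rewrite -[sup _]/(dnorm a) na ltrBlDr ltrDl invr_gt0 ltr0Sn.
  case/sup_gt; first by exists `|a 0|, 0 => //=; rewrite normr0.
  move=> _ [z hz <-] hlt; case: (ger0P (a z)) => az.
    by exists z; split => //; rewrite -(ger0_norm az).
  exists (- z); split; first by rewrite normrN.
  by rewrite dualN // -(ltr0_norm az).
have /choice [u hu] := sq.
have cu : cvg (u @ \oo).
  apply: cauchy_cvg; apply: cauchy_exP => e e0.
  set eps := Num.min e 2.
  have eps0 : 0 < eps by rewrite lt_min e0 ltr0n.
  have eps2 : eps <= 2 by rewrite ge_min lexx orbT.
  have [d d0 hd] : exists2 d : R, 0 < d & forall x y : X, `|x| <= 1 -> `|y| <= 1 -> eps <= `|x - y| -> `|(2 : R)^-1 *: (x + y)| <= 1 - d.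
    by apply: uc; rewrite eps0 eps2.
  have [N hN] := arch_inv d0.
  exists (u N), N => // m /= nm.
  rewrite -ball_normE /ball_ /=.
  have epse : eps <= e by rewrite ge_min lexx.
  apply: lt_le_trans epse; rewrite ltNge; apply/negP => H.
  have [uN1 auN] := hu N; have [um1 aum] := hu m.
  have := hd _ _ uN1 um1 H.
  have := dual_le1 (2^-1 *: (u N + u m)) ha na.
  rewrite dualZ // dualD // => h1 h2.
  have := inv_mono nm => h3.
  have : 1 - d < 2^-1 * (a (u N) + a (u m)).
    rewrite ltr_pdivlMl ?ltr0n //; move: hN auN aum h3.
    move: (N.+1%:R^-1 : R) (m.+1%:R^-1 : R) => p q; lra.
  lra.
have hl : u @ \oo --> lim (u @ \oo) := cu.
set l := lim (u @ \oo) in hl.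
have l1 : `|l| <= 1.
  apply/ler_addgt0Pr => e e0.
  have := hl; move/cvgr_dist_lt => /(_ _ e0) [N _ HN].
  have := HN N (leqnn N); have [uN1 _] := hu N.
  have := ler_normD (u N) (l - u N); rewrite addrC subrK; lra.
have al : 1 <= a l.
  apply/ler_addgt0Pr => e e0.
  have e2 : 0 < e / 2 by rewrite divr_gt0.
  have := hl; move/cvgr_dist_lt => /(_ _ e2) [N _ HN].
  have [N' HN'] := arch_inv e2.
  set n := maxn N N'.
  have := HN n (leq_maxl _ _); have [_ aun] := hu n.
  have := inv_mono (leq_maxr N N' : (N' <= n)%N).
  have := dual_le (l - u n) ha; rewrite na mul1r dualB // => hb.
  have := ler_norml (a l - a (u n)) (`|l - u n|); rewrite hb => /esym/andP [hb1 _].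
  move=> h1 h2.
  have -> : e = e / 2 + e / 2 by field.
  move: (e / 2) HN' aun h1 h2 hb1 => E; move: (N'.+1%:R^-1 : R) (n.+1%:R^-1 : R) => p q; lra.
exists l; split; apply/le_anti.
- by rewrite l1 (le_trans al) // dual_le1.
- by rewrite (le_trans (dual_le1 _ ha na)) //= al.
Qed.


Lemma meridian_dual a b c : is_dual a -> is_dual b -> meridian_arc a b c -> is_dual c.
Proof. by move=> ha hb [lam [mu [_ _ _ ->]]]; apply: is_dual_lin. Qed.

Lemma wedge_cone a b k s : is_dual a -> is_dual b -> wedge a b k -> 0 <= s -> wedge a b (s *: k).
Proof.
move=> ha hb hk s0 c hc; rewrite (dualZ _ _ (meridian_dual ha hb hc)).
by rewrite mulr_ge0_le0 // hk.
Qed.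

Lemma wedge0 a b : is_dual a -> is_dual b -> wedge a b 0.
Proof. by move=> ha hb c hc; rewrite (dual0 (meridian_dual ha hb hc)). Qed.

Lemma wedge_ab a b k : a k <= 0 -> b k <= 0 -> wedge a b k.
Proof.
move=> ak bk c [lam [mu [l0 m0 _ ->]]].
apply: mulr_le0_ge0; last by rewrite invr_ge0 dnorm_ge0.
by rewrite -oppr_ge0 opprD addr_ge0 // -mulrN mulr_ge0 // oppr_ge0.
Qed.

Lemma a_in_arc a b : dnorm a = 1 -> meridian_arc a b a.
Proof.
move=> na; exists 1, 0; split; [exact: ler01 | exact: lexx | by rewrite xpair_eqE oner_eq0 | ].
have -> : (fun y => 1 * a y + 0 * b y) = a by apply: funext => y; rewrite mul1r mul0r addr0.
rewrite na; apply: funext => y; by rewrite divr1 mul1r mul0r addr0.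
Qed.

Lemma polar_rhs a b c y t : uniformly_convex X -> is_dual a -> is_dual b ->
  meridian_arc a b c -> duality y c -> 0 <= t -> polar (wedge a b) (t *: y).
Proof.
move=> uc ha hb hc [hcd cy dy yd] t0; set x := t *: y.
have key : forall k, wedge a b k -> `|x| <= `|x - k|.
  move=> k hk; have [y0|y0] := eqVneq y 0.
    by rewrite /x y0 scaler0 normr0.
  have ny : 0 < `|y| by rewrite normr_gt0.
  have dc : dnorm c = `|y|.
    by apply: (mulIf (negbT (gt_eqF ny))); rewrite dy expr2.
  have ck := hk c hc.
  have h1 := dual_le (x - k) hcd.
  have h2 : c (x - k) = t * (`|y| * `|y|) - c k by rewrite dualB // /x dualZ // cy dc.
  have nx : `|x| = t * `|y| by rewrite /x normrZ ger0_norm.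
  rewrite dc in h1; rewrite -(ler_pM2l ny) nx; apply: (le_trans _ (le_trans (ler_norm _) h1)).
  by rewrite h2 mulrCA lerDl oppr_ge0.
rewrite /polar /metric_proj; apply/seteqP; split => k /=.
  move=> [hk hmin]; have := hmin 0 (wedge0 ha hb); rewrite subr0 => h1.
  have h2 := key k hk.
  have i2 : 0 <= (2:R)^-1 by rewrite invr_ge0 ler0n.
  have h3 := key (2^-1 *: k) (wedge_cone ha hb hk i2).
  have e1 : x - 2^-1 *: k = 2^-1 *: (x + (x - k)).
    have k2 : (2:R)^-1 + 2^-1 = 1 by field.
    by rewrite scalerDr scalerBr addrA -scalerDl k2 scale1r.
  have h4 : `|x| = `|x - k| by apply/le_anti; rewrite h1 h2.
  have h5 : `|2^-1 *: (x + (x - k))| = `|x|.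
    apply/le_anti; apply/andP; split; last by rewrite -e1.
    rewrite (normrZ (2^-1)) (ger0_norm i2).
    rewrite ler_pdivrMl ?ltr0n //; apply: le_trans (ler_normD _ _) _; rewrite -h4; lra.
  have := uc_strict uc h4 h5 => /eqP; rewrite eq_sym subr_eq addrC -subr_eq subrr eq_sym.
  by move/eqP.
move=> ->; split; first exact: wedge0.
by move=> k' hk'; rewrite subr0; apply: key.
Qed.


Lemma polar_lhs a b x : uniformly_convex X -> uniformly_smooth X ->
  dual_sphere a -> dual_sphere b -> b <> a -> b <> (fun x => - a x) ->
  polar (wedge a b) x ->
  exists2 c, meridian_arc a b c &
    exists t : R, exists y : X, [/\ 0 <= t, Jinv_set c y & x = t *: y].
Proof.
move=> uc us [ha na] [hb nb] ba bNa hx.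
have min : forall k, wedge a b k -> `|x| <= `|x - k|.
  move=> k hk; have : metric_proj (wedge a b) x 0 by rewrite hx.
  by case=> _ /(_ k hk); rewrite subr0.
have [->|x0] := eqVneq x 0.
  have [y [y1 ay]] := attain uc ha na.
  exists a; first exact: a_in_arc.
  exists 0, y; split => //; last by rewrite scale0r.
  by split => //; rewrite na y1 ?mulr1 // expr1n.
set p := Dd x.
have hp : is_dual p := D_dual us x0.
have pW : forall k, a k <= 0 -> b k <= 0 -> p k <= 0.
  move=> k ak bk; apply: (D_min us x0) => s s0; apply: min.
  by apply: wedge_cone => //; [exact: wedge_ab | exact: ltW].
have [lam [mu [l0 m0 hpz]]] := farkas ha hb na nb ba bNa hp pW.
have nx : 0 < `|x| by rewrite normr_gt0.
have px : p x = `|x| by exact: D_x.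
have np : dnorm p = 1.
  apply/le_anti; apply/andP; split.
    by apply: dnorm_leM => // z; rewrite mul1r; exact: D_norm.
  have := dual_le x hp; rewrite px (ger0_norm (ltW nx)) => h.
  by rewrite -(ler_pM2r nx) mul1r.
exists p.
  exists lam, mu; split => //.
    rewrite xpair_eqE; apply/negP => /andP [/eqP l00 /eqP m00].
    by move: px; rewrite hpz l00 m00 !mul0r addr0 => /esym/eqP; rewrite normr_eq0 (negbTE x0).
  have -> : (fun y => lam * a y + mu * b y) = p by apply: funext => y; rewrite hpz.
  by rewrite np; apply: funext => y; rewrite divr1 hpz.
set y := `|x|^-1 *: x.
have ny : `|y| = 1.
  by rewrite normrZ ger0_norm ?mulVf ?gt_eqF // invr_ge0 ltW.
exists `|x|, y; split.
- exact: ltW.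
- split => //; rewrite ?np ?ny ?mul1r ?expr1n //.
  by rewrite /y dualZ // px mulVf ?gt_eqF.
- by rewrite /y scalerA mulfV ?gt_eqF // scale1r.
Qed.

End Aux.

Unset Implicit Arguments.

Theorem mainTheorem5 (R : realType) (X : completeNormedModType R)
  (a b : X -> R) :
  uniformly_convex X -> uniformly_smooth X ->
  dual_sphere a -> dual_sphere b -> b <> a -> b <> (fun x => - a x) ->
  polar (wedge a b) =
    \bigcup_(c in meridian_arc a b) [set z | exists t : R, exists y : X, [/\ 0 <= t, Jinv_set c y & z = t *: y]]
  /\ polar (wedge a b) = cone (\bigcup_(c in meridian_arc a b) Jinv_set c).
Proof.
move=> uc us sa sb ba bNa.
have E : polar (wedge a b) =
    \bigcup_(c in meridian_arc a b) [set z | exists t : R, exists y : X, [/\ 0 <= t, Jinv_set c y & z = t *: y]].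
  apply/seteqP; split => x.
    by move=> hx; apply: polar_lhs.
  case: sa sb => ha _ [hb _] [c hc [t [y [t0 hy ->]]]].
  exact: (polar_rhs uc ha hb hc hy t0).
split => //; rewrite E; apply/seteqP; split => x /=.
  by move=> [c hc [t [y [t0 hy ->]]]]; exists t, y; split => //; exists c.
by move=> [t [y [t0 [c hc hy] ->]]]; exists c => //; exists t, y.
Qed.
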